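(* Let $r\ge 3$ and let $t\ge 6$ be even. Then there exists a $(r,t,4)$-staircase graph $G$ such that the graph $G-v_\infty$ (obtained by deleting $v_\infty$ and its incident edges) admits a proper edge colouring with $r+1$ colours (edges sharing a vertex receive different colours).
   Context: Staircase graph: Let $r\ge 2$ and $t\ge 2$ be integers, $s=\lfloor (t-1)/2\rfloor$, and $a_0$ a positive integer; if $t$ is odd assume $t\ge 3$. An $(r,t,a_0)$-staircase graph is a finite simple graph $G$ whose vertex set is a disjoint union $\{v_\infty\}\cup V_0\cup V_1\cup\cdots\cup V_s$ such that: $|V_0|=a_0$ and $v_\infty$ is adjacent to every vertex of $V_0$ and to no other vertex; for each $i$ with $0\le i\le s-1$ (if $t$ is even) or $0\le i\le s-2$ (if $t$ is odd), every vertex of $V_i$ has exactly $r$ neighbours in $V_{i+1}$ and every vertex of $V_{i+1}$ has exactly one neighbour in $V_i$; if $t$ is even, every vertex of $V_s$ has exactly $r$ neighbours in $V_s$; if $t$ is odd, every vertex of $V_{s-1}$ has exactly $r$ neighbours in $V_s$ and every vertex of $V_s$ has exactly $r+1$ neighbours in $V_{s-1}$; and there are no other edges. *)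

(* Defs.v *)
From mathcomp Require Import all_boot.
Set Implicit Arguments. Unset Strict Implicit. Unset Printing Implicit Defensive.

Definition simple_graph (T : finType) (e : rel T) : Prop :=
  irreflexive e /\ symmetric e.

Definition layer (T : finType) (vinf : T) (lev : T -> nat) (i : nat) : {set T} :=
  [set x | (x != vinf) && (lev x == i)].

Definition nbrs_in (T : finType) (e : rel T) (x : T) (A : {set T}) : nat :=
  #|[set y in A | e x y]|.

Definition stair_s (t : nat) : nat := (t.-1)./2.

Definition is_staircase (r t a0 : nat) (T : finType) (e : rel T)
    (vinf : T) (lev : T -> nat) : Prop :=
  let s := stair_s t in
  let V := layer vinf lev in
  simple_graph e /\
  (* vertex set = {vinf} ⊔ V_0 ⊔ ... ⊔ V_s *)
  (forall x, x != vinf -> lev x <= s) /\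
  #|V 0| = a0 /\
  (forall x, e vinf x = (x \in V 0)) /\
  (forall i, (if ~~ odd t then i + 1 <= s else i + 2 <= s) ->
     (forall x, x \in V i -> nbrs_in e x (V i.+1) = r) /\
     (forall y, y \in V i.+1 -> nbrs_in e y (V i) = 1)) /\
  (if ~~ odd t then
     (forall x, x \in V s -> nbrs_in e x (V s) = r)
   else
     (forall x, x \in V s.-1 -> nbrs_in e x (V s) = r) /\
     (forall y, y \in V s -> nbrs_in e y (V s.-1) = r.+1)) /\
  (forall x y, x != vinf -> y != vinf -> e x y ->
     (lev y == (lev x).+1) || (lev x == (lev y).+1) ||
     [&& ~~ odd t, lev x == s & lev y == s]).

Definition proper_edge_colouring_minus (T : finType) (e : rel T) (vinf : T)
    (k : nat) (c : T -> T -> 'I_k) : Prop :=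
  (forall x y, x != vinf -> y != vinf -> e x y -> c x y = c y x) /\
  (forall x y z, x != vinf -> y != vinf -> z != vinf ->
     e x y -> e x z -> y != z -> c x y != c x z).

(* Main.v *)
Require Import Defs.
From mathcomp Require Import all_boot all_algebra zify.
Set Implicit Arguments. Unset Strict Implicit. Unset Printing Implicit Defensive.

Section Constr.
Variables (r' s : nat).
Hypothesis Hs : 0 < s.
Local Notation r := r'.+3.

Lemma rpos : 0 < r. Proof. by []. Qed.

Lemma arith1 q d i : q < r ^ i -> d < r -> q * r + d < r ^ i.+1.
Proof.
move=> hq hd; rewrite expnSr.
have : q.+1 * r <= r ^ i * r by rewrite leq_mul2r hq orbT.
lia.
Qed.

Lemma arith2 n i : n < r ^ i.+1 -> n %/ r < r ^ i.
Proof. by move=> h; rewrite ltn_divLR // -expnSr. Qed.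

Definition Pp (p : 'I_s.+1 * 'I_(r ^ s).-1.+1) : bool := (p.2 : nat) < r ^ (p.1 : nat).
Definition P := {p : 'I_s.+1 * 'I_(r ^ s).-1.+1 | Pp p}.
Definition p0 : P := exist _ (ord0, ord0) (erefl true).
Definition mkP (i n : nat) : P := insubd p0 (inord i, inord n).
Definition lvP (p : P) : nat := (val p).1.
Definition nmP (p : P) : nat := (val p).2.

Lemma mkP_val i n : i <= s -> n < r ^ i -> lvP (mkP i n) = i /\ nmP (mkP i n) = n.
Proof.
move=> hi hn.
have hn' : n < (r ^ s).-1.+1.
  rewrite prednK ?expn_gt0 //; apply: leq_trans hn _; exact: leq_pexp2l.
have hP : Pp (inord i, inord n) by rewrite /Pp /= !inordK.
by rewrite /lvP /nmP /mkP (insubdK _ hP) /= !inordK.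
Qed.

Lemma lvP_le p : lvP p <= s.
Proof. by rewrite /lvP -ltnS ltn_ord. Qed.
Lemma nmP_lt p : nmP p < r ^ lvP p.
Proof. exact: (valP p). Qed.
Lemma P_eq p q : lvP p = lvP q -> nmP p = nmP q -> p = q.
Proof.
move=> h1 h2; apply: val_inj; move: h1 h2; rewrite /lvP /nmP.
case: (val p) => a b; case: (val q) => c d /= h1 h2.
by rewrite (ord_inj h1) (ord_inj h2).
Qed.

Definition Vert := (bool * bool * P)%type.
Definition lv (x : Vert) := lvP x.2.
Definition nm (x : Vert) := nmP x.2.
Lemma V_eq (x y : Vert) : x.1 = y.1 -> lv x = lv y -> nm x = nm y -> x = y.
Proof. by case: x => a p; case: y => b q /= -> h1 h2; rewrite (@P_eq p q h1 h2). Qed.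

Definition dig (x : Vert) : 'I_r := Ordinal (ltn_pmod (nm x) rpos).

Definition pd (c a : 'I_r) : 'I_r := ((c : 'Z_r) + c - a)%R.
Lemma pdK c a : pd c (pd c a) = a.
Proof. by rewrite /pd GRing.subKr. Qed.
Lemma pd_neq c a : (pd c a == c) = (a == c).
Proof.
rewrite /pd GRing.subr_eq (GRing.addrC c a).
apply/eqP/eqP => [h|->]; last by [].
by have := GRing.addIr _ h.
Qed.

Lemma twice_inj (c k : 'I_r) : (c + c < r) = (k + k < r) ->
  (c + c) %% r = (k + k) %% r -> c = k.
Proof.
move=> hs hm; apply: val_inj => /=.
have hc := ltn_ord c; have hk := ltn_ord k.
case: (ltnP (c + c) r) hs => hc2 hs.
  have hk2 : k + k < r by rewrite -hs.
  by move: hm; rewrite !modn_small //; lia.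
have hk2 : r <= k + k by rewrite leqNgt -hs; apply/negP; lia.
move: hm.
have -> : c + c = (c + c - r) + r by lia.
have -> : k + k = (k + k - r) + r by lia.
rewrite !modnDr !modn_small; lia.
Qed.

Lemma pd_inj (c k a : 'I_r) : pd c a = pd k a -> (c + c) %% r = (k + k) %% r.
Proof.
rewrite /pd => /GRing.addIr h.
by have := congr1 val h.
Qed.

Definition flip (c : 'I_r) (j : bool * bool) : bool * bool :=
  (if c + c < r then j.1 else ~~ j.1, ~~ j.2).
Lemma flipK c j : flip c (flip c j) = j.
Proof. by case: j => a b; rewrite /flip /=; case: (c + c < r); rewrite /= ?negbK. Qed.
Lemma flip_side c k j : flip c j = flip k j -> (c + c < r) = (k + k < r).
Proof.
case: j => a b; rewrite /flip => /(congr1 fst) /=.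
by case: (c + c < r); case: (k + k < r); case: a.
Qed.

Definition Q (x y : Vert) (c : 'I_r) : bool :=
  [&& c != dig x, dig y == pd c (dig x) & y.1 == flip c x.1].

Lemma Q_sym x y c : Q x y c = Q y x c.
Proof.
rewrite /Q; apply/and3P/and3P => -[h1 /eqP h2 /eqP h3]; split.
- by rewrite h2 eq_sym pd_neq eq_sym.
- by rewrite h2 pdK.
- by rewrite h3 flipK.
- by rewrite h2 eq_sym pd_neq eq_sym.
- by rewrite h2 pdK.
- by rewrite h3 flipK.
Qed.

Definition leafadj (x y : Vert) : bool :=
  (nm y %/ r == nm x %/ r) &&
  ((y.1 == (~~ x.1.1, x.1.2)) && (dig y == dig x) || [exists c, Q x y c]).

Lemma leafadj_sym x y : leafadj x y = leafadj y x.
Proof.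
rewrite /leafadj eq_sym; congr (_ && _); congr (_ || _).
  rewrite eq_sym; congr (_ && _).
  by case: x y => [[a b] p] [[c d] q] /=; case: a; case: b; case: c; case: d.
  exact: eq_sym.
by apply/existsP/existsP => -[c h]; exists c; rewrite Q_sym.
Qed.

Definition T := option Vert.
Definition e (u v : T) : bool :=
  match u, v with
  | None, None => false
  | None, Some y => lv y == 0
  | Some x, None => lv x == 0
  | Some x, Some y =>
      (x.1 == y.1) && ((lv y == (lv x).+1) && (nm y %/ r == nm x)
                       || (lv x == (lv y).+1) && (nm x %/ r == nm y))
      || [&& lv x == s, lv y == s & leafadj x y]
  end.

Lemma e_sym : symmetric e.
Proof.
case=> [x|] [y|] //=; rewrite leafadj_sym eq_sym; congr (_ || _).
  by rewrite orbC.
by rewrite andbCA.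
Qed.

Lemma leafadj_irr x : leafadj x x = false.
Proof.
rewrite /leafadj.
have -> : (x.1 == (~~ x.1.1, x.1.2)) = false by case: x => [[[] []] p].
rewrite /= eqxx /=; apply/negbTE/existsP => -[c /and3P [_ _]].
move: x => [[a b] p]; rewrite /flip /= xpair_eqE; by case: b; rewrite andbF.
Qed.

Lemma e_irr : irreflexive e.
Proof.
case=> [x|] //=; rewrite leafadj_irr !andbF orbF.
have h : (lv x == (lv x).+1) = false by lia.
by rewrite h /= andbF.
Qed.

Lemma nm_lt x : nm x < r ^ lv x.
Proof. exact: nmP_lt. Qed.
Lemma lv_le x : lv x <= s.
Proof. exact: lvP_le. Qed.

Lemma nm_div_lt x : lv x = s -> nm x %/ r < r ^ s.-1.
Proof. move=> h; apply: arith2; rewrite prednK // -h; exact: nm_lt. Qed.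

Definition mkleaf (j : bool * bool) (q : nat) (d : 'I_r) : Vert :=
  (j, mkP s (q * r + d)).

Lemma mkleaf_val j q d : q < r ^ s.-1 ->
  [/\ lv (mkleaf j q d) = s, nm (mkleaf j q d) = q * r + d & (mkleaf j q d).1 = j].
Proof.
move=> hq; have h : q * r + d < r ^ s.
  by rewrite -(prednK Hs); apply: arith1.
by have [h1 h2] := mkP_val (leqnn s) h.
Qed.

Lemma nm_decomp x : nm x = nm x %/ r * r + dig x.
Proof. exact: divn_eq. Qed.

Lemma dig_mk q (d : 'I_r) y : nm y = q * r + d -> dig y = d /\ nm y %/ r = q.
Proof.
move=> h; split.
  by apply: val_inj; rewrite /= h modnMDl modn_small.
by rewrite h divnMDl // divn_small // addn0.
Qed.

Definition part (x : Vert) (k : 'I_r) : Vert :=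
  if k == dig x then mkleaf (~~ x.1.1, x.1.2) (nm x %/ r) (dig x)
  else mkleaf (flip k x.1) (nm x %/ r) (pd k (dig x)).

Lemma part_lv x k : lv x = s -> lv (part x k) = s /\ nm (part x k) %/ r = nm x %/ r.
Proof.
move=> h; have hq := nm_div_lt h.
rewrite /part; case: ifP => _.
  have [h1 h2 _] := mkleaf_val (~~ x.1.1, x.1.2) (dig x) hq; split => //; exact: (dig_mk h2).2.
have [h1 h2 _] := mkleaf_val (flip k x.1) (pd k (dig x)) hq; split => //; exact: (dig_mk h2).2.
Qed.

Lemma part_adj x k : lv x = s -> leafadj x (part x k).
Proof.
move=> h; have hq := nm_div_lt h.
rewrite /leafadj; have [_ ->] := part_lv k h; rewrite eqxx /=.
rewrite /part; case: ifP => hk.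
  have [h1 h2 h3] := mkleaf_val (~~ x.1.1, x.1.2) (dig x) hq.
  by rewrite h3 eqxx (dig_mk h2).1 eqxx.
have [h1 h2 h3] := mkleaf_val (flip k x.1) (pd k (dig x)) hq.
apply/orP; right; apply/existsP; exists k.
by rewrite /Q h3 eqxx (dig_mk h2).1 eqxx hk.
Qed.

Lemma leafadj_part x y : lv x = s -> lv y = s -> leafadj x y -> exists k, y = part x k.
Proof.
move=> hx hy; have hq := nm_div_lt hx.
rewrite /leafadj => /andP [/eqP hd /orP [/andP [/eqP hj /eqP hg] | /existsP [c /and3P [hc /eqP hg /eqP hj]]]].
  exists (dig x); rewrite /part eqxx.
  have [h1 h2 h3] := mkleaf_val (~~ x.1.1, x.1.2) (dig x) hq.
  apply: V_eq; [by rewrite h3 | by rewrite h1 | by rewrite h2 nm_decomp hd hg].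
exists c; rewrite /part (negbTE hc).
have [h1 h2 h3] := mkleaf_val (flip c x.1) (pd c (dig x)) hq.
apply: V_eq; [by rewrite h3 | by rewrite h1 | by rewrite h2 nm_decomp hd hg].
Qed.

Definition lc (x y : Vert) : nat :=
  if y.1 == (~~ x.1.1, x.1.2) then r
  else if [pick c | Q x y c] is Some c then val c else 0.

Lemma lc_le x y : lc x y <= r.
Proof. rewrite /lc; case: ifP => // _; case: pickP => // c _; exact: ltnW (ltn_ord c). Qed.

Lemma lc_sym x y : lc x y = lc y x.
Proof.
rewrite /lc.
have -> : (y.1 == (~~ x.1.1, x.1.2)) = (x.1 == (~~ y.1.1, y.1.2)).
  by case: x y => [[a b] p] [[c d] q] /=; case: a; case: b; case: c; case: d.
by rewrite (eq_pick (Q_sym x y)).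
Qed.

Definition kk (x : Vert) (k : 'I_r) : nat := if k == dig x then r else k.

Lemma lc_part x k : lv x = s -> lc x (part x k) = kk x k.
Proof.
move=> h; have hq := nm_div_lt h.
rewrite /kk /part; case: ifP => hk; rewrite /lc.
  by rewrite /= eqxx.
have [h1 h2 h3] := mkleaf_val (flip k x.1) (pd k (dig x)) hq.
rewrite h3.
have -> : (flip k x.1 == (~~ x.1.1, x.1.2)) = false.
  by case: x {h hq h1 h2 h3 hk} => [[a b] p]; rewrite /flip /= xpair_eqE; case: b; rewrite andbF.
case: pickP => [c /and3P [hc /eqP hg /eqP hj] | none].
  rewrite h3 in hj; rewrite (dig_mk h2).1 in hg.
  have e1 := flip_side hj; have e2 := pd_inj hg.
  by rewrite (twice_inj e1 e2).
have := none k; rewrite /Q h3 eqxx (dig_mk h2).1 eqxx hk //.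
Qed.

Lemma kk_inj x k k' : kk x k = kk x k' -> k = k'.
Proof.
rewrite /kk; case: ifP => /eqP h; case: ifP => /eqP h' //.
- by move=> _; rewrite h h'.
- move=> E; have := ltn_ord k'; by rewrite -E ltnn.
- move=> E; have := ltn_ord k; by rewrite E ltnn.
- exact: val_inj.
Qed.

Lemma kk_neq x k : kk x k != dig x.
Proof.
rewrite /kk; case: ifP => h.
  by rewrite neq_ltn ltn_ord orbT.
exact: (negbT h).
Qed.

Lemma part_inj x k k' : lv x = s -> part x k = part x k' -> k = k'.
Proof.
move=> h E; apply: (@kk_inj x); rewrite -!lc_part //; by rewrite E.
Qed.

Definition child (x : Vert) (a : 'I_r) : Vert := (x.1, mkP (lv x).+1 (nm x * r + a)).
Definition parent (x : Vert) : Vert := (x.1, mkP (lv x).-1 (nm x %/ r)).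

Lemma child_val x a : lv x < s -> lv (child x a) = (lv x).+1 /\ nm (child x a) = nm x * r + a.
Proof. move=> h; apply: mkP_val => //; apply: arith1 => //; exact: nm_lt. Qed.

Lemma parent_val x : 0 < lv x -> lv (parent x) = (lv x).-1 /\ nm (parent x) = nm x %/ r.
Proof.
move=> h; apply: mkP_val; first by have := lv_le x; lia.
apply: arith2; rewrite prednK //; exact: nm_lt.
Qed.

Lemma e_cases x y : e (Some x) (Some y) ->
  [\/ y = parent x /\ 0 < lv x,
      lv x < s /\ exists a, y = child x a
    | [/\ lv x = s, lv y = s & exists k, y = part x k]].
Proof.
move=> /orP [/andP [/eqP hj /orP [/andP [/eqP hl /eqP hn] | /andP [/eqP hl /eqP hn]]] | /and3P [/eqP h1 /eqP h2 hl]].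
- have hs : lv x < s by have := lv_le y; lia.
  apply: Or32; split => //; exists (dig y).
  have [c1 c2] := child_val (dig y) hs.
  apply: V_eq => //; first by rewrite c1.
  by rewrite c2 nm_decomp hn.
- have hp : 0 < lv x by lia.
  apply: Or31; split => //.
  have [c1 c2] := parent_val hp.
  apply: V_eq => //; first by rewrite c1; lia.
  by rewrite c2 hn.
- by apply: Or33; split => //; apply: leafadj_part.
Qed.

Definition ff (y a : nat) : nat := if a < y then a else a.+1.
Definition gg (y k : nat) : nat := if k == r then y else ff y k.

Lemma ff_le y a : y <= r -> a < r -> ff y a <= r.
Proof. rewrite /ff; case: ifP; lia. Qed.
Lemma ff_neq y a : ff y a != y.
Proof. rewrite /ff; case: ifP; lia. Qed.
Lemma ff_inj y a b : ff y a = ff y b -> a = b.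
Proof. rewrite /ff; case: ifP; case: ifP; lia. Qed.
Lemma gg_inj y k k' : gg y k = gg y k' -> k = k'.
Proof.
rewrite /gg; case: ifP => /eqP h; case: ifP => /eqP h' //.
- by rewrite h h'.
- by move=> E; have := ff_neq y k'; rewrite -E eqxx.
- by move=> E; have := ff_neq y k; rewrite E eqxx.
- exact: ff_inj.
Qed.

Fixpoint pcol (i n : nat) : nat :=
  if i is i'.+1 then ff (pcol i' (n %/ r)) (n %% r) else r.
Lemma pcol_le i n : pcol i n <= r.
Proof.
elim: i n => [|i IH] n //=; apply: ff_le => //; exact: ltn_pmod.
Qed.

Definition pc (x : Vert) : nat := pcol (lv x) (nm x).

Definition colN (x y : Vert) : nat :=
  if lv x == lv y then gg (pcol s.-1 (nm x %/ r)) (lc x y)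
  else if lv x < lv y then pc y else pc x.

Lemma colN_le x y : colN x y <= r.
Proof.
rewrite /colN /gg; case: ifP => _; last by case: ifP => _; exact: pcol_le.
case: ifP => h; first exact: pcol_le.
apply: ff_le; first exact: pcol_le.
have := lc_le x y; move/negbT: h; lia.
Qed.

Lemma pc_child x a : lv x < s -> pc (child x a) = ff (pc x) a.
Proof.
move=> h; have [c1 c2] := child_val a h.
rewrite /pc c1 c2 /= divnMDl // divn_small // addn0 modnMDl modn_small //.
Qed.

Lemma pc_leaf x : lv x = s -> pc x = gg (pcol s.-1 (nm x %/ r)) (dig x).
Proof.
move=> h; rewrite /pc h -{1}(prednK Hs) /= /gg.
have -> : (dig x == r :> nat) = false by have := ltn_ord (dig x); lia.
by [].
Qed.

Lemma colN_parent x : 0 < lv x -> colN x (parent x) = pc x.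
Proof.
move=> h; have [c1 c2] := parent_val h.
rewrite /colN c1.
have -> : (lv x == (lv x).-1) = false by lia.
by have -> : (lv x < (lv x).-1) = false by lia.
Qed.

Lemma colN_child x a : lv x < s -> colN x (child x a) = ff (pc x) a.
Proof.
move=> h; have [c1 c2] := child_val a h.
rewrite /colN c1 ltnSn -pc_child //.
by have -> : (lv x == (lv x).+1) = false by lia.
Qed.

Lemma colN_part x k : lv x = s -> colN x (part x k) = gg (pcol s.-1 (nm x %/ r)) (kk x k).
Proof.
move=> h; have [p1 p2] := part_lv k h.
by rewrite /colN p1 h eqxx lc_part.
Qed.

Lemma colN_sym x y : e (Some x) (Some y) -> colN x y = colN y x.
Proof.
move=> E; rewrite /colN eq_sym.
case: ifP => hl.
  case: (e_cases E) => [[hy hp] | [hs [a hy]] | [h1 h2 [k hk]]].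
  - by have [c1 _] := parent_val hp; move: hl; rewrite hy c1; lia.
  - by have [c1 _] := child_val a hs; move: hl; rewrite hy c1; lia.
  - have [_ p2] := part_lv k h1; rewrite -hk in p2.
    by rewrite p2 lc_sym.
case: ltngtP hl => //.
Qed.

Lemma colN_proper x y z : e (Some x) (Some y) -> e (Some x) (Some z) -> y != z ->
  colN x y != colN x z.
Proof.
move=> Ey Ez; apply: contra => /eqP E; apply/eqP.
case: (e_cases Ey) => [[hy hp] | [hs [a hy]] | [h1 h2 [k hy]]];
case: (e_cases Ez) => [[hz hp'] | [hs' [b hz]] | [h1' h2' [k' hz]]]; subst y z.
- by [].
- by move: E; rewrite colN_parent // colN_child // => /eqP; rewrite eq_sym (negbTE (ff_neq _ _)).
- by move: E; rewrite colN_parent // colN_part // pc_leaf // => /gg_inj /eqP; rewrite eq_sym (negbTE (kk_neq _ _)).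
- by move: E; rewrite colN_parent // colN_child // => /eqP; rewrite (negbTE (ff_neq _ _)).
- move: E; rewrite !colN_child // => /ff_inj h.
  by rewrite (val_inj h).
- by move: hs; rewrite h1' ltnn.
- by move: E; rewrite colN_parent // colN_part // pc_leaf // => /gg_inj /eqP; rewrite (negbTE (kk_neq _ _)).
- by move: hs'; rewrite h1 ltnn.
- by move: E; rewrite !colN_part // => /gg_inj /kk_inj ->.
Qed.

Definition levT (u : T) : nat := if u is Some x then lv x else 0.

Lemma card_nbrs (U : finType) (ee : rel U) x (A : {set U}) n (f : 'I_n -> U) :
  injective f -> (forall a, f a \in A /\ ee x (f a)) ->
  (forall y, y \in A -> ee x y -> exists a, y = f a) -> nbrs_in ee x A = n.
Proof.
move=> fi h1 h2; rewrite /nbrs_in.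
have -> : [set y in A | ee x y] = f @: setT.
  apply/setP => y; rewrite inE; apply/andP/imsetP.
  - by move=> [hA he]; have [a ->] := h2 y hA he; exists a.
  - by move=> [a _ ->]; exact: h1.
by rewrite card_imset // cardsT card_ord.
Qed.

Lemma inV (y : Vert) i : (Some y \in layer (None : T) levT i) = (lv y == i).
Proof. by rewrite /layer inE. Qed.

Definition colT (u v : T) : 'I_r.+1 :=
  match u, v with Some x, Some y => inord (colN x y) | _, _ => ord0 end.

Lemma main_sec t : ~~ odd t -> s = stair_s t ->
  exists (TT : finType) (ee : rel TT) (vinf : TT) (lev : TT -> nat),
    is_staircase r t 4 ee vinf lev /\
    exists c : TT -> TT -> 'I_r.+1, proper_edge_colouring_minus ee vinf c.
Proof.
move=> Ht Hst.
exists T, e, None, levT; split; last first.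
  exists colT; split.
  - by case=> [x|] // [y|] // _ _ E; rewrite /colT colN_sym.
  - case=> [x|] // [y|] // [z|] // _ _ _ Ey Ez hyz.
    have hyz' : y != z by apply: contra hyz => /eqP ->.
    apply: contra (colN_proper Ey Ez hyz') => /eqP /(congr1 val).
    by rewrite /= !inordK ?ltnS ?colN_le // => ->.
rewrite /is_staircase -Hst Ht /=.
have hm0 : lvP (mkP 0 0) = 0 /\ nmP (mkP 0 0) = 0 by apply: mkP_val; rewrite ?expn0.
split; first by split; [exact: e_irr | exact: e_sym].
split; first by case=> [x|] // _; exact: lv_le.
split.
  have -> : layer None levT 0 = [set Some (j, mkP 0 0) | j : bool * bool].
    apply/setP => y; apply/idP/imsetP.
    - case: y => [y|]; rewrite ?inV //; last by rewrite /layer inE.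
      move=> /eqP h0; exists y.1 => //; congr Some.
      apply: V_eq => //; first by rewrite h0 /lv /= hm0.1.
      have := nm_lt y; rewrite h0 expn0 /nm /= hm0.2; lia.
    - by move=> [j _ ->]; rewrite /layer inE /= /lv /= hm0.1.
  rewrite card_imset; first by rewrite card_prod card_bool.
  by move=> a b /(congr1 (fun u : T => if u is Some v then v.1 else a)).
split; first by case=> [x|] //; rewrite /layer inE.
split.
  move=> i hi; split.
  - case=> [x|]; rewrite /layer inE //= => /eqP hx.
    have hs : lv x < s by lia.
    apply: (@card_nbrs _ e (Some x) _ r (fun a => Some (child x a))).
    + move=> a b /(congr1 (fun u : T => if u is Some v then nm v else 0)) /=.
      have [_ c1] := child_val a hs; have [_ c2] := child_val b hs.
      rewrite c1 c2 => h; apply: val_inj => /=; lia.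
    + move=> a; have [c1 c2] := child_val a hs; split.
      * by rewrite /layer inE /= c1 hx.
      * by rewrite /= c2 divnMDl // divn_small // addn0 eqxx c1 !eqxx.
    + case=> [y|]; rewrite /layer inE //= => /eqP hy E.
      case: (e_cases E) => [[hy' hp] | [_ [a hy']] | [h1 h2 _]].
      * by have [c1 _] := parent_val hp; move: hy; rewrite hy' c1; lia.
      * by exists a; rewrite hy'.
      * by move: hs; rewrite h1 ltnn.
  - case=> [y|]; rewrite /layer inE //= => /eqP hy.
    have hp : 0 < lv y by lia.
    have [c1 c2] := parent_val hp.
    apply: (@card_nbrs _ e (Some y) _ 1 (fun _ => Some (parent y))).
    + by move=> a b _; rewrite (ord1 a) (ord1 b).
    + move=> a; split.
      * by rewrite /layer inE /= c1 hy.
      * by rewrite /= c1 c2 hy !eqxx /= orbT.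
    + case=> [x|]; rewrite /layer inE //= => /eqP hx E.
      case: (e_cases E) => [[hx' _] | [hs [a hx']] | [h1 h2 _]].
      * by exists ord0; rewrite hx'.
      * by have [d1 _] := child_val a hs; move: hx; rewrite hx' d1; lia.
      * by move: hx; rewrite h2; lia.
split.
  case=> [x|]; rewrite /layer inE //= => /eqP hx.
  apply: (@card_nbrs _ e (Some x) _ r (fun k => Some (part x k))).
  + by move=> a b [] /(part_inj hx).
  + move=> k; have [p1 p2] := part_lv k hx; split.
    * by rewrite /layer inE /= p1.
    * by rewrite /= p1 hx eqxx part_adj // orbT.
  + case=> [y|]; rewrite /layer inE //= => /eqP hy E.
    case: (e_cases E) => [[hy' hp] | [hs _] | [h1 h2 [k hk]]].
    * by have [c1 _] := parent_val hp; move: hy; rewrite hy' c1; lia.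
    * by move: hs; rewrite hx ltnn.
    * by exists k; rewrite hk.
case=> [x|] // [y|] // _ _ E.
case: (e_cases E) => [[hy hp] | [hs [a hy]] | [h1 h2 _]].
- by have [c1 _] := parent_val hp; rewrite /= hy c1; apply/orP; left; apply/orP; right; lia.
- by have [c1 _] := child_val a hs; rewrite /= hy c1 eqxx.
- by rewrite /= h1 h2 eqxx !orbT.
Qed.
End Constr.

Theorem mainTheorem13 (r t : nat) :
  3 <= r -> 6 <= t -> ~~ odd t ->
  exists (T : finType) (e : rel T) (vinf : T) (lev : T -> nat),
    is_staircase r t 4 e vinf lev /\
    exists c : T -> T -> 'I_r.+1, proper_edge_colouring_minus e vinf c.
Proof.
move=> Hr Ht Hodd.
have [r' ->] : exists r', r = r'.+3 by exists (r - 3); lia.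
have Hs : 0 < stair_s t.
  rewrite /stair_s; case: t Ht Hodd => [|[|[|t']]] //= _ _.
exact: (@main_sec r' (stair_s t) Hs t Hodd erefl).
Qed.
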